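(* Let $\Sigma$ be a non-orientable surface (possibly with boundary), let $D\subset\Sigma$ be an oriented diagram of a pseudo-classical knot in $\Sigma\times[0,1]$ with a labeling of its $2$-cabling $D^2$, and let $x$ be a crossing of $D$. Then: (1) Reversing the orientation of $D$, and also relabeling $D^2$, each turns the positive smoothing at $x$ into the negative one and vice versa, regardless of whether $x$ is of type $1$ or type $2$. (2) The crossing change operation at $x$ turns the positive smoothing at $x$ into the negative one and vice versa if $x$ is of type $1$, and does not change which smoothing is positive if $x$ is of type $2$. (3) The positive smoothing at $x$ is the one determined by the crossing of the $4$-crossing pattern of $x$ at which the overgoing arc of $R(D)$ enters the pattern; in particular, the actual direction of the undergoing arc of $D$ at $x$ and the actual labeling of the undergoing arcs of $D^2$ at $x$ do not affect which smoothing at $x$ is positive.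
   Context: $\Sigma\times[0,1]$ is the non-orientable $3$-manifold with fixed product structure; knots in it are represented by diagrams on $\Sigma$. A knot is pseudo-classical if it is an orientation-preserving loop in $\Sigma\times[0,1]$; then its diagram $D$ is an orientation-preserving loop in $\Sigma$. The $2$-cabling $D^2$ replaces $D$ by two parallel copies preserving over/under information; it has two components. A labeling of $D^2$ names one component $R(D)$ and the other $L(D)$; relabeling swaps the names; both components are oriented consistently with $D$. Each crossing $x$ of $D$ gives a pattern of $4$ crossings of $D^2$, which correspond bijectively to the four angles of $D$ at $x$. The input crossing $\mathrm{In}(x)$ is the crossing of the pattern at which both strands through it enter the pattern (traversing in the positive direction). The sign of $x$ is $1$ if $R(D)$ goes over $L(D)$ at $\mathrm{In}(x)$; $-1$ if $L(D)$ goes over $R(D)$ there; $i$ if $R(D)$ goes over itself there; $-i$ if $L(D)$ goes over itself there. $x$ is of type $1$ if $\operatorname{sign}(x)=\pm1$ and of type $2$ if $\operatorname{sign}(x)=\pm i$. A smoothing of $x$ pairs two opposite (vertical) angles at $x$, equivalently two diagonal crossings of the pattern; it is said to be determined by either of these crossings. The smoothing determined by $\mathrm{In}(x)$ is called along the orientation; the other is across the orientation. The positive smoothing at $x$ is the one along the orientation if $\operatorname{sign}(x)\in\{1,i\}$ and across the orientation if $\operatorname{sign}(x)\in\{-1,-i\}$; the other smoothing is negative. The crossing change at $x$ swaps over- and under-branches at $x$. *)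

(* Defs.v *)
(* We fix a local chart (a disc) around x in which the two branches of D
   through x are the horizontal axis (branch H) and the vertical axis
   (branch V).  In D^2 each branch is replaced by two parallel copies: the
   copies of H lie at y = +d and y = -d, the copies of V at x = +d and x = -d.
   The 4 crossings of the pattern are the points (+-d, +-d); they are in
   bijection with the 4 angles (quadrants) of D at x.  A sign of a coordinate
   is a bool (true = positive). *)
From Stdlib Require Import Bool.

Inductive branch : Type := H | V.

Definition other_branch (b : branch) : branch :=
  match b with H => V | V => H end.

Record crossing : Type := Crossing {
  over : branch;
  dir : branch -> bool;     (* orientation of D along the branch:
                               true = towards the positive coordinate *)
  rlab : branch -> bool     (* true iff the copy of the branch lying on the
                               positive side (y=+d for H, x=+d for V)
                               belongs to R(D); the other copy is in L(D) *)
}.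

Definition under (c : crossing) : branch := other_branch (over c).

(* a crossing of the 4-crossing pattern = an angle of D at x :
   (sign of x-coordinate, sign of y-coordinate) *)
Definition pcross : Type := (bool * bool)%type.

(* the copy of branch b through the pattern crossing q is the one at
   transverse coordinate [side b q] *)
Definition side (b : branch) (q : pcross) : bool :=
  match b with H => snd q | V => fst q end.

Definition along_coord (b : branch) (q : pcross) : bool :=
  match b with H => fst q | V => snd q end.

(* label of the copy of branch b at transverse side s: true = R(D), false = L(D) *)
Definition label (c : crossing) (b : branch) (s : bool) : bool :=
  if s then rlab c b else negb (rlab c b).

(* Input crossing In(x): both strands (travelling in the positive direction)
   enter the pattern there, i.e. at coordinate opposite to their direction. *)
Definition In (c : crossing) : pcross := (negb (dir c H), negb (dir c V)).

Inductive csign : Type := Plus1 | Minus1 | PlusI | MinusI.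

Definition sign (c : crossing) : csign :=
  match label c (over c) (side (over c) (In c)),
        label c (under c) (side (under c) (In c)) with
  | true, false => Plus1     (* R(D) over L(D) *)
  | false, true => Minus1    (* L(D) over R(D) *)
  | true, true => PlusI      (* R(D) over itself *)
  | false, false => MinusI   (* L(D) over itself *)
  end.

Definition type1 (c : crossing) : Prop := sign c = Plus1 \/ sign c = Minus1.
Definition type2 (c : crossing) : Prop := sign c = PlusI \/ sign c = MinusI.

(* A smoothing pairs two opposite angles, i.e. two diagonal pattern
   crossings.  There are two smoothings, encoded by a bool:
   true = {(+,+),(-,-)}, false = {(+,-),(-,+)}. *)
Definition smoothing : Type := bool.
Definition other_smoothing (s : smoothing) : smoothing := negb s.

Definition smoothing_of (q : pcross) : smoothing := Bool.eqb (fst q) (snd q).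

Definition smoothing_along (c : crossing) : smoothing := smoothing_of (In c).
Definition smoothing_across (c : crossing) : smoothing :=
  other_smoothing (smoothing_along c).

Definition positive_smoothing (c : crossing) : smoothing :=
  match sign c with
  | Plus1 | PlusI => smoothing_along c
  | Minus1 | MinusI => smoothing_across c
  end.

Definition negative_smoothing (c : crossing) : smoothing :=
  other_smoothing (positive_smoothing c).

Definition reverse (c : crossing) : crossing :=
  Crossing (over c) (fun b => negb (dir c b)) (rlab c).

Definition relabel (c : crossing) : crossing :=
  Crossing (over c) (dir c) (fun b => negb (rlab c b)).

Definition crossing_change (c : crossing) : crossing :=
  Crossing (under c) (dir c) (rlab c).

(* The pattern crossing at which the overgoing arc of R(D) enters the
   pattern: it lies on the R-copy of the over branch (transverse side
   s with label R), at the entry coordinate (opposite to the direction of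
   the over branch). *)
Definition R_over_entry (c : crossing) : pcross :=
  let b := over c in
  let s := rlab c b in            (* side of the R copy: label c b s = true *)
  let e := negb (dir c b) in      (* entry coordinate along b *)
  match b with H => (e, s) | V => (s, e) end.

(* Main.v *)
Require Import Defs.

Theorem lemma3 (c : crossing) :
  (* (1) reversing orientation / relabeling swap positive and negative *)
  (positive_smoothing (reverse c) = negative_smoothing c /\
   negative_smoothing (reverse c) = positive_smoothing c /\
   positive_smoothing (relabel c) = negative_smoothing c /\
   negative_smoothing (relabel c) = positive_smoothing c) /\
  (* (2) crossing change *)
  (type1 c -> positive_smoothing (crossing_change c) = negative_smoothing c /\
              negative_smoothing (crossing_change c) = positive_smoothing c) /\
  (type2 c -> positive_smoothing (crossing_change c) = positive_smoothing c) /\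
  (* (3) characterization via the entry point of the over arc of R(D) *)
  (positive_smoothing c = smoothing_of (R_over_entry c) /\
   forall c' : crossing,
     over c' = over c ->
     dir c' (over c) = dir c (over c) ->
     rlab c' (over c) = rlab c (over c) ->
     positive_smoothing c' = positive_smoothing c).
Proof.
  destruct c as [o d r].
  unfold negative_smoothing, type1, type2, reverse, relabel, crossing_change;
  unfold positive_smoothing, smoothing_across, smoothing_along, sign, R_over_entry, In, under,
    label, side, smoothing_of, other_smoothing; simpl.
  destruct o; simpl;
  destruct (d H), (d V), (r H), (r V); simpl;
  repeat split; intros;
  repeat match goal with E : _ \/ _ |- _ => destruct E as [E|E] end;
  try discriminate;
  try reflexivity;
  repeat match goal with
  | c' : crossing |- _ => destruct c' as [o' d' r']; simpl in *; subst o'; simpl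
  end;
  repeat match goal with E : _ = _ |- _ => rewrite E; clear E end;
  simpl; destruct (d' _), (r' _); reflexivity.
Qed.
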